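(* Let $G=(V,E)$ be a strongly biconnected directed graph and let $U\subseteq E$ be such that the directed subgraph $G_1=(V,U)$ is strongly connected but the underlying undirected graph of $G_1$ is not biconnected. Let $(v,w)\in E\setminus U$ be an edge such that $v$ and $w$ are not in the same strongly biconnected component of $G_1$. Then the directed subgraph $(V,U\cup\{(v,w)\})$ has fewer strongly biconnected components than $G_1$.
   Context: A directed graph is strongly biconnected if it is strongly connected and its underlying undirected graph (obtained by ignoring edge directions) is biconnected. A strongly biconnected component of a directed graph is a maximal strongly biconnected subgraph of it (in the sense of Wu and Grumbach); two vertices are in the same strongly biconnected component if some strongly biconnected component contains both. *)

(* Defs.v *)
(* Finite directed graphs on a finType T; an edge set is a
   {set T * T}.  A (directed) subgraph is a pair (S, F) of a vertex set S and
   an edge set F whose edges have both endpoints in S. *)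
From mathcomp Require Import all_boot.
Set Implicit Arguments. Unset Strict Implicit. Unset Printing Implicit Defensive.

Section Digraphs.
Variable T : finType.

Definition darc (S : {set T}) (F : {set T * T}) : rel T :=
  fun x y => [&& x \in S, y \in S & (x, y) \in F].

Definition uarc (S : {set T}) (F : {set T * T}) : rel T :=
  fun x y => darc S F x y || darc S F y x.

Definition is_subgraph (E : {set T * T}) (S : {set T}) (F : {set T * T}) : bool :=
  (F \subset E) && [forall e in F, (e.1 \in S) && (e.2 \in S)].

Definition strongly_connected (S : {set T}) (F : {set T * T}) : bool :=
  [forall x in S, forall y in S, connect (darc S F) x y].

Definition uconnected (S : {set T}) (F : {set T * T}) : bool :=
  [forall x in S, forall y in S, connect (uarc S F) x y].

Definition biconnected (S : {set T}) (F : {set T * T}) : bool :=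
  [&& S != set0, uconnected S F & [forall z in S, uconnected (S :\ z) F]].

Definition strongly_biconnected (S : {set T}) (F : {set T * T}) : bool :=
  strongly_connected S F && biconnected S F.

Definition is_sbc (E : {set T * T}) (p : {set T} * {set T * T}) : bool :=
  [&& is_subgraph E p.1 p.2, strongly_biconnected p.1 p.2 &
      [forall S' : {set T}, forall F' : {set T * T},
        [&& is_subgraph E S' F', strongly_biconnected S' F',
            p.1 \subset S' & p.2 \subset F'] ==> ((S', F') == p)]].

Definition sbcs (E : {set T * T}) : {set {set T} * {set T * T}} :=
  [set p | is_sbc E p].

Definition same_sbc (E : {set T * T}) (v w : T) : bool :=
  [exists p in sbcs E, (v \in p.1) && (w \in p.1)].

End Digraphs.

(* Main.v *)
Require Import Defs.
From mathcomp Require Import all_boot.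
Set Implicit Arguments. Unset Strict Implicit. Unset Printing Implicit Defensive.

Section Aux.
Variable T : finType.
Implicit Types (S : {set T}) (F : {set T * T}).

Lemma darc_mono S S' F F' x y : S \subset S' -> F \subset F' ->
  darc S F x y -> darc S' F' x y.
Proof.
move=> sS sF /and3P[xS yS e]; apply/and3P; split.
- exact: (subsetP sS). - exact: (subsetP sS). - exact: (subsetP sF).
Qed.

Lemma uarc_mono S S' F F' x y : S \subset S' -> F \subset F' ->
  uarc S F x y -> uarc S' F' x y.
Proof.
move=> sS sF /orP[h|h]; apply/orP; [left|right]; exact: darc_mono h.
Qed.

Lemma connect_darc_mono S S' F F' x y : S \subset S' -> F \subset F' ->
  connect (darc S F) x y -> connect (darc S' F') x y.
Proof.
move=> sS sF; apply: connect_sub => a b h; apply: connect1; exact: darc_mono h.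
Qed.

Lemma connect_uarc_mono S S' F F' x y : S \subset S' -> F \subset F' ->
  connect (uarc S F) x y -> connect (uarc S' F') x y.
Proof.
move=> sS sF; apply: connect_sub => a b h; apply: connect1; exact: uarc_mono h.
Qed.

Lemma uarc_sym S F : symmetric (uarc S F).
Proof. by move=> x y; rewrite /uarc orbC. Qed.

Lemma connect_uarc_sym S F x y : connect (uarc S F) x y = connect (uarc S F) y x.
Proof. exact: (sym_connect_sym (uarc_sym S F)). Qed.

Lemma uconn_hub S F c :
  (forall x, x \in S -> connect (uarc S F) x c) -> uconnected S F.
Proof.
move=> h; apply/forallP => x; apply/implyP => xS; apply/forallP => y;
apply/implyP => yS.
apply: connect_trans (h x xS) _; rewrite connect_uarc_sym; exact: h.
Qed.

Lemma sc_hub S F c :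
  (forall x, x \in S -> connect (darc S F) x c && connect (darc S F) c x) ->
  strongly_connected S F.
Proof.
move=> h; apply/forallP => x; apply/implyP => xS; apply/forallP => y;
apply/implyP => yS.
case/andP: (h x xS) => h1 _; case/andP: (h y yS) => _ h2.
exact: connect_trans h1 h2.
Qed.

Lemma scP S F x y : strongly_connected S F -> x \in S -> y \in S ->
  connect (darc S F) x y.
Proof. by move=> /forallP/(_ x)/implyP h xS yS; move/h: xS => /forallP/(_ y)/implyP; apply. Qed.

Lemma ucP S F x y : uconnected S F -> x \in S -> y \in S ->
  connect (uarc S F) x y.
Proof. by move=> /forallP/(_ x)/implyP h xS yS; move/h: xS => /forallP/(_ y)/implyP; apply. Qed.

Lemma sc_uc S F : strongly_connected S F -> uconnected S F.
Proof.
move=> h; apply/forallP => x; apply/implyP => xS; apply/forallP => y;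
apply/implyP => yS.
apply: connect_sub (scP h xS yS) => a b e; apply: connect1; by rewrite /uarc e.
Qed.

Lemma bic_del S F z x y : biconnected S F -> x \in S :\ z -> y \in S :\ z ->
  connect (uarc (S :\ z) F) x y.
Proof.
case/and3P=> _ uc /forallP hz xS yS.
case zS: (z \in S).
  by move/implyP: (hz z); rewrite zS => /(_ isT) h; apply: ucP h xS yS.
have -> : S :\ z = S.
  apply/setP => u; rewrite !inE; case: eqP => // ->; by rewrite zS.
move: xS yS; rewrite !inE => /andP[_ xS] /andP[_ yS]; exact: ucP uc xS yS.
Qed.

Lemma sb_union S1 F1 S2 F2 a b : a != b -> a \in S1 -> b \in S1 ->
  a \in S2 -> b \in S2 ->
  strongly_biconnected S1 F1 -> strongly_biconnected S2 F2 ->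
  strongly_biconnected (S1 :|: S2) (F1 :|: F2).
Proof.
move=> ab a1 b1 a2 b2 /andP[sc1 bc1] /andP[sc2 bc2].
have s1 : S1 \subset S1 :|: S2 by apply: subsetUl.
have s2 : S2 \subset S1 :|: S2 by apply: subsetUr.
have f1 : F1 \subset F1 :|: F2 by apply: subsetUl.
have f2 : F2 \subset F1 :|: F2 by apply: subsetUr.
have sc : strongly_connected (S1 :|: S2) (F1 :|: F2).
  apply: (@sc_hub _ _ a) => x; rewrite inE => /orP[xS|xS]; apply/andP; split.
  - exact: connect_darc_mono s1 f1 (scP sc1 xS a1).
  - exact: connect_darc_mono s1 f1 (scP sc1 a1 xS).
  - exact: connect_darc_mono s2 f2 (scP sc2 xS a2).
  - exact: connect_darc_mono s2 f2 (scP sc2 a2 xS).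
apply/andP; split=> //; apply/and3P; split.
- by apply/set0Pn; exists a; rewrite inE a1.
- exact: sc_uc.
apply/forallP => z; apply/implyP => _.
pose c := if z == a then b else a.
have cz : c != z by rewrite /c; case: (z =P a) => [->|/eqP h]; rewrite eq_sym.
have c1 : c \in S1 by rewrite /c; case: ifP.
have c2 : c \in S2 by rewrite /c; case: ifP.
apply: (@uconn_hub _ _ c) => x; rewrite !inE => /andP[xz /orP[xS|xS]].
- apply: (@connect_uarc_mono (S1 :\ z) _ F1) => //.
    by apply: setSD.
  by apply: bic_del bc1 _ _; rewrite !inE ?xz ?cz.
- apply: (@connect_uarc_mono (S2 :\ z) _ F2) => //.
    by apply: setSD.
  by apply: bic_del bc2 _ _; rewrite !inE ?xz ?cz.
Qed.


Definition ind F S : {set T * T} := [set e in F | (e.1 \in S) && (e.2 \in S)].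

Lemma ind_sub F S : ind F S \subset F.
Proof. by apply/subsetP => e; rewrite inE => /andP[]. Qed.

Lemma ind_subgraph F S : is_subgraph F S (ind F S).
Proof.
apply/andP; split; first exact: ind_sub.
by apply/forall_inP => e; rewrite inE => /andP[].
Qed.

Lemma darc_ind F S x y : darc S (ind F S) x y = darc S F x y.
Proof.
rewrite /darc inE /=; case: (x \in S); case: (y \in S) => //=; by rewrite andbT.
Qed.

Lemma cycle_sb F x p : uniq (x :: p) -> path (darc setT F) x p ->
  (last x p, x) \in F ->
  strongly_biconnected [set y in x :: p] (ind F [set y in x :: p]).
Proof.
move=> up hp hl.
set c := x :: p; set S := [set y in c].
have cyc : cycle (darc setT F) c by rewrite /c /= rcons_path hp /darc !inE /= hl.
have conn : forall y u, y \in c -> u \in c -> connect (darc S (ind F S)) y u.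
  move=> y u yc uc; case: (rot_to yc) => i s hrot.
  have : cycle (darc setT F) (y :: s) by rewrite -hrot rot_cycle.
  rewrite /= rcons_path => /andP[ps _].
  have ps' : path (darc S (ind F S)) y s.
    have sub : {in mem S &, subrel (darc setT F) (darc S (ind F S))}.
      move=> a b aS bS; rewrite darc_ind /darc; move: aS bS => /= aS bS.
      by rewrite aS bS /= /darc !inE.
    have al : all (mem S) (y :: s).
      apply/allP => a; rewrite -hrot mem_rot => ac; change (a \in S); by rewrite inE.
    exact: (sub_in_path sub al ps).
  have hu : u \in y :: s by rewrite -hrot mem_rot.
  exact: (path_connect ps' hu).
have sc : strongly_connected S (ind F S).
  apply/forallP => a; apply/implyP; rewrite inE => ac; apply/forallP => b;
  apply/implyP; rewrite inE => bc; exact: conn.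
apply/andP; split=> //; apply/and3P; split.
- by apply/set0Pn; exists x; rewrite inE /c mem_head.
- exact: sc_uc.
apply/forallP => z; apply/implyP; rewrite inE => zc.
case: (rot_to zc) => i s hrot.
have us : uniq (z :: s) by rewrite -hrot rot_uniq.
have : cycle (darc setT F) (z :: s) by rewrite -hrot rot_cycle.
case: s hrot us => [|y s] hrot us.
  move=> _; apply: (@uconn_hub _ _ z) => u; rewrite in_setD1 in_set => /andP[uz].
  by rewrite -(mem_rot i) hrot inE (negbTE uz).
rewrite /= rcons_path => /andP[_ /andP[ps _]].
have ps' : path (uarc (S :\ z) (ind F S)) y s.
  have sub : {in mem (S :\ z) &, subrel (darc setT F) (uarc (S :\ z) (ind F S))}.
    move=> a b aS bS h; apply/orP; left.
    move: aS bS h => /=; rewrite !in_setD1 !in_set => /andP[az ac] /andP[bz bc].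
    by rewrite /darc !in_setD1 !in_set az ac bz bc /= andbT.
  have al : all (mem (S :\ z)) (y :: s).
    apply/allP => a ha; change (a \in S :\ z); rewrite in_setD1 in_set.
    have -> : a \in c by rewrite -(mem_rot i) hrot inE ha orbT.
    rewrite andbT; apply/eqP => az; move: us; rewrite /= -az.
    by rewrite ha.
  exact: (sub_in_path sub al ps).
apply: (@uconn_hub _ _ y) => u; rewrite in_setD1 in_set => /andP[uz uc].
rewrite connect_uarc_sym.
have hu : u \in y :: s by move: uc; rewrite -(mem_rot i) hrot inE (negbTE uz).
exact: (path_connect ps' hu).
Qed.


Lemma sb_single (v : T) (G : {set T * T}) : strongly_biconnected [set v] G.
Proof.
have sc : strongly_connected [set v] G.
  by apply: (@sc_hub _ _ v) => x /set1P ->; rewrite connect0.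
apply/andP; split=> //; apply/and3P; split.
- by apply/set0Pn; exists v; rewrite inE.
- exact: sc_uc.
apply/forallP => z; apply/implyP => /set1P ->.
by apply: (@uconn_hub _ _ v) => x; rewrite in_setD1 in_set1 => /andP[/negbTE ->].
Qed.

Lemma sbc_max (E : {set T * T}) p S' F' : p \in sbcs E -> is_subgraph E S' F' ->
  strongly_biconnected S' F' -> p.1 \subset S' -> p.2 \subset F' -> (S', F') = p.
Proof.
rewrite inE => /and3P[_ _ /forallP h] sg sb s1 s2.
move/forallP: (h S') => /(_ F') /implyP h'; apply/eqP; apply: h'.
by rewrite sg sb s1 s2.
Qed.

Lemma sbc_props (E : {set T * T}) p : p \in sbcs E ->
  is_subgraph E p.1 p.2 /\ strongly_biconnected p.1 p.2.
Proof. by rewrite inE => /and3P[]. Qed.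

Lemma sbc_intro (E : {set T * T}) p : is_subgraph E p.1 p.2 -> strongly_biconnected p.1 p.2 ->
  (forall S' F', is_subgraph E S' F' -> strongly_biconnected S' F' ->
     p.1 \subset S' -> p.2 \subset F' -> (S', F') = p) -> p \in sbcs E.
Proof.
move=> sg sb h; rewrite inE; apply/and3P; split=> //.
apply/forallP => S'; apply/forallP => F'; apply/implyP => /and4P[a b c d].
by apply/eqP; apply: h.
Qed.

Lemma ext_sbc (E : {set T * T}) S F : is_subgraph E S F -> strongly_biconnected S F ->
  exists2 K, K \in sbcs E & S \subset K.1.
Proof.
move=> sg sb.
pose P := fun q : {set T} * {set T * T} =>
  [&& is_subgraph E q.1 q.2, strongly_biconnected q.1 q.2 & S \subset q.1].
have P0 : P (S, F) by rewrite /P sg sb subxx.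
case: (arg_maxnP (fun q : {set T} * {set T * T} => #|q.1| + #|q.2|) P0).
move=> K /and3P[sgK sbK sK] maxK; exists K => //.
apply: sbc_intro => // S' F' sg' sb' s1 s2.
have PS : P (S', F') by rewrite /P sg' sb' (subset_trans sK s1).
have := maxK _ PS => /= hle.
have c1 := subset_leq_card s1; have c2 := subset_leq_card s2.
have e1 : K.1 == S' by rewrite eqEcard s1 /= -(leq_add2r #|F'|) (leq_trans hle) // leq_add2l.
have e2 : K.2 == F' by rewrite eqEcard s2 /= -(leq_add2l #|S'|) (leq_trans hle) // leq_add2r.
by case: K {sgK sbK sK maxK P0 hle c1 c2 s1 s2} e1 e2 => /= a b /eqP -> /eqP ->.
Qed.

Lemma upath F a b : connect (darc setT F) a b ->
  exists p, [/\ path (darc setT F) a p, uniq (a :: p) & last a p = b].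
Proof.
case/connectP => p hp ->; case/shortenP: hp => p' hp' up _; by exists p'.
Qed.

Lemma darcT F a b : darc setT F a b = ((a, b) \in F).
Proof. by rewrite /darc !inE. Qed.

Lemma edge_sbc (U : {set T * T}) a b : strongly_connected setT U -> (a, b) \in U ->
  exists2 K, K \in sbcs U & (a \in K.1) && (b \in K.1).
Proof.
move=> sc ab.
have [p [hp up hl]] := upath (scP sc (in_setT b) (in_setT a)).
have hl' : (last b p, b) \in U by rewrite hl.
have sb := cycle_sb up hp hl'.
have [K HK sK] := ext_sbc (ind_subgraph U _) sb.
exists K => //; apply/andP; split; apply: (subsetP sK); rewrite inE.
- by rewrite -hl mem_last.
- exact: mem_head.
Qed.

Lemma subgraph_union (E : {set T * T}) S1 F1 S2 F2 : is_subgraph E S1 F1 -> is_subgraph E S2 F2 ->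
  is_subgraph E (S1 :|: S2) (F1 :|: F2).
Proof.
case/andP=> s1 /forall_inP h1; case/andP=> s2 /forall_inP h2.
apply/andP; split; first by rewrite subUset s1 s2.
apply/forall_inP => e; rewrite inE => /orP[/h1|/h2] /andP[x y]; by rewrite !inE x y ?orbT.
Qed.

Lemma subgraph_mono (E E' : {set T * T}) S F : E \subset E' -> is_subgraph E S F -> is_subgraph E' S F.
Proof. by move=> sE /andP[s h]; rewrite /is_subgraph (subset_trans s sE). Qed.


Lemma absorbed (U U' : {set T * T}) K C G a b v : U \subset U' -> K \in sbcs U ->
  is_subgraph U' C G -> strongly_biconnected C G -> a != b ->
  a \in K.1 -> b \in K.1 -> a \in C -> b \in C -> v \in C -> v \notin K.1 ->
  K \notin sbcs U'.
Proof.
move=> sub HK sgC sbC ab aK bK aC bC vC vK; apply/negP => KU'.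
have [sgK sbK] := sbc_props HK.
have e := sbc_max KU' (subgraph_union (subgraph_mono sub sgK) sgC)
  (sb_union ab aK bK aC bC sbK sbC) (subsetUl _ _) (subsetUl _ _).
move/negP: vK; apply; rewrite -e /= inE vC orbT //.
Qed.

End Aux.

Unset Implicit Arguments. Set Strict Implicit. Set Printing Implicit Defensive.

Theorem mainTheorem1 (T : finType) (E U : {set T * T}) (v w : T) :
  strongly_biconnected [set: T] E ->
  U \subset E ->
  strongly_connected [set: T] U ->
  ~ biconnected [set: T] U ->
  (v, w) \in E -> (v, w) \notin U ->
  ~ same_sbc U v w ->
  #|sbcs ((v, w) |: U)| < #|sbcs U|.
Proof.
move=> _ _ scU _ _ vwU nsame.
set U' := (v, w) |: U.
have sub : U \subset U' by apply: subsetUr.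
have ns : forall K, K \in sbcs U -> v \in K.1 -> w \in K.1 -> False.
  by move=> K HK vK wK; apply: nsame; apply/exists_inP; exists K => //; rewrite vK wK.
have vw : v != w.
  apply/eqP => e; subst v.
  have [K HK sK] := ext_sbc (ind_subgraph U [set w]) (sb_single w (ind U [set w])).
  by apply: (ns K HK); apply: (subsetP sK); rewrite inE.
have [p [hp up hl]] := upath (scP scU (in_setT w) (in_setT v)).
case/lastP: p hp up hl => [|r z] hp up hl.
  by move: vw; rewrite -hl /= eqxx.
rewrite last_rcons in hl; subst z.
have [y [q er]] : exists y q, r = y :: q.
  case: r hp {up} => [|y q] hp; last by exists y, q.
  move: hp; rewrite /= darcT andbT => hwv.
  by case: (edge_sbc scU hwv) => K HK /andP[wK vK]; case: (ns K HK vK wK).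
set C := [set u in w :: rcons r v].
have hp' : path (darc setT U') w (rcons r v).
  by apply: sub_path hp => a b; apply: darc_mono.
have hl' : (last w (rcons r v), w) \in U' by rewrite last_rcons !inE eqxx.
have sbC := cycle_sb up hp' hl'.
have sgC : is_subgraph U' C (ind U' C) := ind_subgraph U' C.
have vC : v \in C by rewrite in_set in_cons mem_rcons mem_head orbT.
have wC : w \in C by rewrite in_set mem_head.
have hp0 := hp.
move: hp; rewrite rcons_path => /andP[hr hx].
set x := last w r in hx.
have xC : x \in C by rewrite in_set -cats1 -cat_cons mem_cat mem_last.
have xv : x != v.
  apply/eqP => e; move: up; rewrite -rcons_cons rcons_uniq => /andP[/negP nv _].
  by apply: nv; rewrite -e mem_last.
rewrite darcT in hx.
have [K2 HK2 /andP[xK2 vK2]] := edge_sbc scU hx.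
have K2n : K2 \notin sbcs U'.
  apply: (absorbed sub HK2 sgC sbC xv xK2 vK2 xC vC wC).
  by apply/negP => wK2; exact: (ns K2 HK2 vK2 wK2).
have hwy : (w, y) \in U by move: hp0; rewrite er /= darcT => /andP[].
have yC : y \in C by rewrite in_set er /= !in_cons eqxx orbT.
have wy : w != y.
  by apply/eqP => e; move: up; rewrite er /= in_cons -e eqxx.
have [K1 HK1 /andP[wK1 yK1]] := edge_sbc scU hwy.
have K1n : K1 \notin sbcs U'.
  apply: (absorbed sub HK1 sgC sbC wy wK1 yK1 wC yC vC).
  by apply/negP => vK1; exact: (ns K1 HK1 vK1 wK1).
have K12 : K1 != K2 by apply/eqP => e; subst K2; exact: (ns K1 HK1 vK2 wK1).
have claimA : forall t, t \in sbcs U' -> (v, w) \notin t.2 -> t \in sbcs U.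
  move=> t Hq nt; have [sgt sbt] := sbc_props Hq.
  apply: sbc_intro => //.
    case/andP: sgt => st ht; apply/andP; split=> //.
    apply/subsetP => e eq; move: (subsetP st e eq); rewrite !inE => /orP[/eqP ee|//].
    by move: nt; rewrite -ee eq.
  move=> S' F' sg' sb' s1 s2; exact: sbc_max Hq (subgraph_mono sub sg') sb' s1 s2.
have claimB : forall q1 q2, q1 \in sbcs U' -> q2 \in sbcs U' ->
    (v, w) \in q1.2 -> (v, w) \in q2.2 -> q1 = q2.
  move=> q1 q2 H1 H2 h1 h2.
  have [sg1 sb1] := sbc_props H1; have [sg2 sb2] := sbc_props H2.
  have /andP[v1 w1] : (v \in q1.1) && (w \in q1.1).
    by case/andP: sg1 => _ /forall_inP /(_ _ h1).
  have /andP[v2 w2] : (v \in q2.1) && (w \in q2.1).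
    by case/andP: sg2 => _ /forall_inP /(_ _ h2).
  have sbU := sb_union vw v1 w1 v2 w2 sb1 sb2.
  have sgU := subgraph_union sg1 sg2.
  have e1 := sbc_max H1 sgU sbU (subsetUl _ _) (subsetUl _ _).
  have e2 := sbc_max H2 sgU sbU (subsetUr _ _) (subsetUr _ _).
  exact: (etrans (esym e1) e2).
set A := sbcs U'; set B := sbcs U.
set X := [set t in A | (v, w) \in t.2].
have sA : A \subset (B :\ K1 :\ K2) :|: X.
  apply/subsetP => t tA; rewrite in_setU.
  case: (boolP ((v, w) \in t.2)) => h.
    by apply/orP; right; rewrite inE tA h.
  have tB := claimA t tA h.
  apply/orP; left; rewrite !in_setD1 tB andbT; apply/andP; split.
    by apply/eqP => e; move: K2n; rewrite -e tA.
  by apply/eqP => e; move: K1n; rewrite -e tA.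
have cX : #|X| <= 1.
  apply/card_le1_eqP => q1 q2; rewrite !inE => /andP[H1 h1] /andP[H2 h2].
  have H1' : q1 \in sbcs U' by rewrite inE.
  have H2' : q2 \in sbcs U' by rewrite inE.
  exact: (claimB q2 q1 H2' H1' h2 h1).
have c1 := cardsD1 K1 B.
have c2 := cardsD1 K2 (B :\ K1).
have m1 : K1 \in B := HK1.
have m2 : K2 \in B :\ K1 by rewrite in_setD1 HK2 eq_sym K12.
rewrite m1 in c1; rewrite m2 in c2.
have c3 := leq_trans (subset_leq_card sA) (leq_card_setU _ _).1.
rewrite c1 c2 /=; rewrite !add1n.
apply: (leq_ltn_trans c3); rewrite -[X in _ < X]addn2 ltn_add2l.
apply: (leq_ltn_trans cX); by rewrite ltnS.
Qed.
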